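(* $\mathcal{H}_{N}'$ is generated as a Lie algebra by the elements $h_{\pm e_i}$ ($1\le i\le N$) and $h_{\pm e_j\pm e_k}$ ($1\le j<k\le N$).
   Context: $\mathbb{K}$ is an algebraically closed field of characteristic zero, $N=2m\ge2$ even, $e_1,\dots,e_N$ the standard basis of $\mathbb{Z}^N\subset\mathbb{K}^N$, $(\cdot,\cdot)$ the bilinear form with $(e_i,e_j)=\delta_{ij}$. Let $A_N=\mathbb{K}[t_1^{\pm1},\dots,t_N^{\pm1}]$, $d_i=t_i\frac{\partial}{\partial t_i}$, $t^{\bm r}=t_1^{r_1}\cdots t_N^{r_N}$, $D(u,\bm r)=\sum_i u_it^{\bm r}d_i$. Let $\bm J=\begin{pmatrix} O_m & I_m\\ -I_m & O_m\end{pmatrix}$, $\overline{\bm r}=\bm J\bm r$, $h_{\bm r}=D(\overline{\bm r},\bm r)$ (so $h_{\bm 0}=0$). $\mathcal{H}_N'=\operatorname{span}_{\mathbb{K}}\{h_{\bm r}:\bm r\in\mathbb{Z}^N\setminus\{\bm0\}\}$ is the Lie algebra with bracket $[h_{\bm r},h_{\bm s}]=(\overline{\bm r},\bm s)h_{\bm r+\bm s}$ (derived subalgebra of the Hamiltonian Lie algebra). *)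

(* Defs.v *)
From HB Require Import structures.
From mathcomp Require Import all_boot all_order all_algebra.
From mathcomp Require Import finmap.
From mathcomp.multinomials Require Import monalg.
Set Implicit Arguments. Unset Strict Implicit. Unset Printing Implicit Defensive.
Import Order.TTheory GRing.Theory Num.Theory.
Local Open Scope ring_scope.

(* N = m + m.  Lattice points r in Z^N are row vectors 'rV[int]_(m+m). *)
Definition latt (m : nat) := 'rV[int]_(m + m).

Definition Jmx (m : nat) : 'M[int]_(m + m) := block_mx 0 1%:M (-1%:M) 0.

Definition rbar m (r : latt m) : latt m := (Jmx m *m r^T)^T.

Definition dotK (K : fieldType) m (u v : latt m) : K :=
  \sum_(i < m + m) ((u 0 i) * (v 0 i))%:~R.

Definition ee m (i : 'I_(m + m)) : latt m := delta_mx 0 i.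

(* The ambient vector space: finitely supported K-linear combinations of
   symbols h_r, r in Z^N.  H'_N is the subspace with zero coefficient at r = 0
   (h_0 = 0). *)
Definition Hspace (K : fieldType) m := {malg K[latt m]}.

Definition hb (K : fieldType) m (r : latt m) : Hspace K m :=
  if r == 0 then 0 else << (1 : K) *g r >>.

Definition inH (K : fieldType) m (x : Hspace K m) : Prop := x@_0 = 0.

Definition hbr (K : fieldType) m (x y : Hspace K m) : Hspace K m :=
  \sum_(r <- msupp x) \sum_(s <- msupp y)
     (x@_r * y@_s * dotK K (rbar r) s) *: hb K (r + s).

Inductive lie_gen (K : fieldType) m (S : Hspace K m -> Prop) : Hspace K m -> Prop :=
  | lg_gen x : S x -> lie_gen S x
  | lg_zero : lie_gen S 0
  | lg_add x y : lie_gen S x -> lie_gen S y -> lie_gen S (x + y)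
  | lg_scale (c : K) x : lie_gen S x -> lie_gen S (c *: x)
  | lg_br x y : lie_gen S x -> lie_gen S y -> lie_gen S (hbr x y).

Definition gens (K : fieldType) m (x : Hspace K m) : Prop :=
  (exists (i : 'I_(m + m)) (a : int), (a == 1) || (a == -1) /\ x = hb K (a *: ee i))
  \/ (exists (j k : 'I_(m + m)) (a b : int),
        [/\ (j < k)%N, (a == 1) || (a == -1), (b == 1) || (b == -1)
          & x = hb K (a *: ee j + b *: ee k)]).

(* Main.v *)
Require Import Defs.
From HB Require Import structures.
From mathcomp Require Import all_boot all_order all_algebra.
From mathcomp Require Import finmap.
From mathcomp.multinomials Require Import monalg.
From mathcomp Require Import zify ring lra.
Import Order.TTheory GRing.Theory Num.Theory.
Local Open Scope ring_scope.
Set Implicit Arguments. Unset Strict Implicit.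

Section S1.
Variable (K : fieldType) (m : nat).
Implicit Types (r s t u v : latt m).

Lemma hb0 : hb K (0 : latt m) = 0.
Proof. by rewrite /hb eqxx. Qed.

Lemma hbE r : r != 0 -> hb K r = << (1:K) *g r >>.
Proof. by rewrite /hb => /negbTE ->. Qed.

Lemma hb_coef0 r : (hb K r)@_0 = 0.
Proof.
rewrite /hb; case: eqP => [_|/eqP h]; first by rewrite mcoeff0.
by rewrite mcoeffU (negbTE h).
Qed.

Lemma hbr0l y : hbr (0 : Hspace K m) y = 0.
Proof. by rewrite /hbr msupp0 big_seq_fset0. Qed.

Lemma hbr_hb r s : r != 0 -> s != 0 ->
  hbr (hb K r) (hb K s) = dotK K (rbar r) s *: hb K (r + s).
Proof.
move=> hr hs; rewrite /hbr (hbE hr) (hbE hs) !msuppU oner_eq0 !big_seq_fset1 !mcoeffUU.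
by rewrite !mul1r.
Qed.

Lemma part1 x : lie_gen (@gens K m) x -> inH x.
Proof.
rewrite /inH; elim => //.
- move=> y [[i [a [_ ->]]]|[j [k [a [b [_ _ _ ->]]]]]]; exact: hb_coef0.
- by rewrite mcoeff0.
- by move=> y z _ h1 _ h2; rewrite mcoeffD h1 h2 addr0.
- by move=> c y _ h; rewrite mcoeffZ h mulr0.
- move=> y z _ _ _ _; rewrite /hbr raddf_sum big1 // => r _.
  rewrite raddf_sum big1 // => s _.
  by rewrite /= mcoeffZ hb_coef0 mulr0.
Qed.

Lemma part2_red x : inH x -> (forall r, r != 0 -> lie_gen (@gens K m) (hb K r)) ->
  lie_gen (@gens K m) x.
Proof.
rewrite /inH => h0 H; rewrite [x]monalgE big_seq.
apply: (big_ind (lie_gen (@gens K m))); [exact: lg_zero| exact: lg_add|].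
move=> r hr.
have rn0 : r != 0 by apply/eqP => e; move: hr; rewrite -mcoeff_neq0 e h0 eqxx.
have -> : << x@_r *g r >> = x@_r *: hb K r.
  by apply/malgP => k; rewrite mcoeffZ hbE // !mcoeffU mulr_natr.
by apply: lg_scale; apply: H.
Qed.
End S1.

Section S.
Variable (m : nat).
Implicit Types (r s t u v : latt m).

Definition pi (i : 'I_(m + m)) : 'I_(m + m) :=
  match split i with inl j => rshift m j | inr j => lshift m j end.
Definition sg (i : 'I_(m + m)) : int :=
  match split i with inl _ => 1 | inr _ => -1 end.

Lemma ordP (i : 'I_(m + m)) : (exists j, i = lshift m j) \/ (exists j, i = rshift m j).
Proof. rewrite -(splitK i); case: (split i) => j; [left|right]; exists j; by []. Qed.

Lemma pi_l j : pi (lshift m j) = rshift m j.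
Proof. by rewrite /pi (unsplitK (inl _ j)). Qed.
Lemma pi_r j : pi (rshift m j) = lshift m j.
Proof. by rewrite /pi (unsplitK (inr _ j)). Qed.
Lemma sg_l j : sg (lshift m j) = 1.
Proof. by rewrite /sg (unsplitK (inl _ j)). Qed.
Lemma sg_r j : sg (rshift m j) = -1.
Proof. by rewrite /sg (unsplitK (inr _ j)). Qed.

Lemma piK : involutive pi.
Proof. by move=> i; case: (ordP i) => [[j ->]|[j ->]]; rewrite ?pi_l ?pi_r ?pi_l. Qed.
Lemma sg_pi i : sg (pi i) = - sg i.
Proof. by case: (ordP i) => [[j ->]|[j ->]]; rewrite ?pi_l ?pi_r ?sg_l ?sg_r ?opprK. Qed.
Lemma pi_neq i : pi i != i.
Proof.
case: (ordP i) => [[j ->]|[j ->]]; rewrite ?pi_l ?pi_r; apply/eqP => /(congr1 val) /=; have := ltn_ord j; lia.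
Qed.
Lemma sg_neq0 i : sg i != 0.
Proof. by case: (ordP i) => [[j ->]|[j ->]]; rewrite ?sg_l ?sg_r. Qed.

Lemma rbarE u i : (rbar u) 0 i = sg i * u 0 (pi i).
Proof.
rewrite /rbar -[u]hsubmxK tr_row_mx /Jmx mul_block_col !mul0mx !mul1mx mulNmx mul1mx.
rewrite add0r addr0 tr_col_mx !trmxK.
case: (ordP i) => [[j ->]|[j ->]].
  by rewrite row_mxEl pi_l sg_l mul1r row_mxEr.
by rewrite row_mxEr pi_r sg_r row_mxEl mulN1r !mxE. Qed.

Definition om u v : int := \sum_i sg i * u 0 (pi i) * v 0 i.

Lemma dotKE (K : fieldType) u v : dotK K (rbar u) v = (om u v)%:~R.
Proof.
rewrite /dotK /om rmorph_sum; apply: eq_bigr => i _; by rewrite rbarE.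
Qed.

Lemma omDl u w v : om (u + w) v = om u v + om w v.
Proof. rewrite /om -big_split; apply: eq_bigr => i _; rewrite mxE /=; ring. Qed.
Lemma omZl c u v : om (c *: u) v = c * om u v.
Proof. rewrite /om mulr_sumr; apply: eq_bigr => i _; rewrite mxE /=; ring. Qed.
Lemma omDr u v w : om u (v + w) = om u v + om u w.
Proof. rewrite /om -big_split; apply: eq_bigr => i _; rewrite mxE /=; ring. Qed.
Lemma omNr u v : om u (- v) = - om u v.
Proof. rewrite /om -sumrN; apply: eq_bigr => i _; rewrite mxE /=; ring. Qed.
Lemma eeE a i : (@ee m a) 0 i = (i == a)%:R.
Proof. by rewrite mxE eqxx. Qed.
Lemma om_ee a v : om (@ee m a) v = sg (pi a) * v 0 (pi a).
Proof.
rewrite /om (bigD1 (pi a)) //= big1 ?addr0 => [|i hi].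
  by rewrite eeE piK eqxx mulr1.
rewrite eeE; case: eqP => [e|]; last by rewrite mulr0 mul0r.
by move: hi; rewrite -e piK eqxx.
Qed.
Lemma om_self u : om u u = 0.
Proof.
have h : om u u = - om u u.
  rewrite {1}/om (reindex_inj (inv_inj piK)) /om -sumrN; apply: eq_bigr => i _.
  rewrite piK sg_pi; ring.
move: h; set z := om u u; lia.
Qed.
End S.

Section Main.
Variable (K : fieldType) (m : nat).
Hypothesis charK0 : [pchar K] =i pred0.
Implicit Types (r s t u v : latt m).

Definition L r := lie_gen (@gens K m) (hb K r).

Lemma intr_neq0 (z : int) : z != 0 -> (z%:~R : K) != 0.
Proof.
have h := (pcharf0P K).1 charK0.
case: z => n hz; first by rewrite -pmulrn h.
by rewrite NegzE mulrNz oppr_eq0 -pmulrn h.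
Qed.

Lemma om0l v : om (0 : latt m)%R v = 0.
Proof. by rewrite /om big1 // => i _; rewrite mxE mulr0 mul0r. Qed.
Lemma om0r u : om u 0 = 0.
Proof. by rewrite /om big1 // => i _; rewrite mxE mulr0. Qed.

Lemma L0 : L 0.
Proof. by rewrite /L hb0; exact: lg_zero. Qed.

Lemma Lbr s t : L s -> L t -> om s t != 0 -> L (s + t).
Proof.
move=> hs ht hst.
have sn0 : s != 0 by apply: contraNneq hst => ->; rewrite om0l.
have tn0 : t != 0 by apply: contraNneq hst => ->; rewrite om0r.
have hK := intr_neq0 hst.
rewrite /L; have -> : hb K (s + t) = (om s t)%:~R^-1 *: hbr (hb K s) (hb K t).
  by rewrite hbr_hb // dotKE scalerA mulVf // scale1r.
by apply: lg_scale; apply: lg_br.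
Qed.

Lemma Lgen1 a (c : int) : (c == 1) || (c == -1) -> L (c *: @ee m a).
Proof. by move=> hc; apply: lg_gen; left; exists a, c. Qed.

Lemma Lgen2 a b (c d : int) : a != b -> (c == 1) || (c == -1) -> (d == 1) || (d == -1) ->
  L (c *: @ee m a + d *: @ee m b).
Proof.
move=> hab hc hd; apply: lg_gen; right.
case: (ltngtP a b) => h.
- by exists a, b, c, d.
- by exists b, a, d, c; rewrite addrC.
- by move: hab; rewrite (val_inj h) eqxx.
Qed.

Definition sgn (z : int) : int := if 0 < z then 1 else -1.
Lemma sgn_pm z : (sgn z == 1) || (sgn z == -1).
Proof. by rewrite /sgn; case: ifP. Qed.
Lemma sgn_neq0 z : sgn z != 0.
Proof. by rewrite /sgn; case: ifP. Qed.

Definition nrm r : nat := \sum_i absz (r 0%R i).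
Lemma updE r c a i : (r + c *: @ee m a) 0 i = r 0 i + c * (i == a)%:R.
Proof. by rewrite !mxE eqxx. Qed.

Lemma nrm_upd r c a : (nrm (r + c *: @ee m a)%R + absz (r 0%R a) = nrm r + absz (r 0%R a + c)%R)%N.
Proof.
rewrite /nrm (bigD1 a) // [in RHS](bigD1 a) //= updE eqxx mulr1.
rewrite (eq_bigr (fun i => absz (r 0%R i))); first by lia.
by move=> i /negbTE hi; rewrite updE hi mulr0 addr0.
Qed.

Definition flag r := [exists i, (r 0 i != 0) && (r 0 (pi i) != 0)].
Definition mu r := (2 * nrm r + ~~ flag r)%N.

Lemma main n r : (mu r < n)%N -> L r.
Proof.
elim: n r => // n IH r hmu.
case: (eqVneq r 0) => [->|rn0]; first exact: L0.
case: (boolP (flag r)) => hf.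
- case/existsP: hf => i /andP [h1 h2].
  set a := pi i; set c := sgn (r 0 a).
  set s := c *: @ee m a; set t := r + (- c) *: @ee m a.
  have tE : t = r - s by rewrite /t /s scaleNr.
  have -> : r = s + t by rewrite tE addrC subrK.
  apply: Lbr.
  + exact: Lgen1 (sgn_pm _).
  + apply: IH.
    have := nrm_upd r (- c) a.
    have : (absz (r 0%R a - c)%R + 1 = absz (r 0%R a))%N.
      by move: h2; rewrite -/a /c /sgn; case: ifP => h; lia.
    move: hmu; rewrite /mu -/t; case: (flag t); case: (flag r) => /=; lia.
  + rewrite tE omDr omNr om_self subr0 /s omZl om_ee /a piK.
    by rewrite mulf_neq0 ?sgn_neq0 // mulf_neq0 ?sg_neq0.
- have hB : forall i, r 0 i != 0 -> r 0 (pi i) = 0.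
    move=> i hi; apply/eqP; move/existsPn: hf => /(_ i).
    by rewrite hi /= negbK.
  have [p hp] : exists p, r 0 p != 0.
    case: (boolP [exists p, r 0 p != 0]) => [/existsP //|/existsPn hall].
    move: rn0; suff -> : r = 0 by rewrite eqxx.
    apply/matrixP => i j; rewrite (ord1 i) mxE; apply/eqP.
    by move: (hall j); rewrite negbK.
  case: (boolP [exists q, (r 0 q != 0) && ((q != p) || (1 < absz (r 0%R p))%N)]).
  + case/existsP => q /andP [hq hqp].
    set d := sgn (r 0 q).
    set s := 1 *: @ee m (pi p) + d *: @ee m q.
    set r1 := r + (- d) *: @ee m q.
    set t := r1 + (- 1) *: @ee m (pi p).
    have hpq : pi p != q by apply: contraNneq hq => <-; rewrite hB.
    have tE : t = r - s by rewrite /t /r1 /s !scaleNr opprD addrA [RHS]addrAC.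
    have -> : r = s + t by rewrite tE addrC subrK.
    apply: Lbr.
    * by apply: Lgen2 => //; exact: sgn_pm.
    * apply: IH.
      have e1 := nrm_upd r (- d) q.
      have e2 := nrm_upd r1 (- 1) (pi p).
      have e3 : r1 0 (pi p) = 0 by rewrite /r1 updE (negbTE hpq) mulr0 addr0 hB.
      have e4 : (absz (r 0%R q - d)%R + 1 = absz (r 0%R q))%N.
        by move: hq; rewrite /d /sgn; case: ifP => h; lia.
      have ft : flag t.
        apply/existsP; exists p; apply/andP; split.
          rewrite /t /r1 !updE [p == pi p]eq_sym (negbTE (pi_neq p)) mulr0 addr0.
          case: (eqVneq p q) => [epq|]; last by rewrite mulr0 addr0.
          move: hqp; rewrite -epq eqxx /= /d -epq mulr1 /sgn.
          by case: ifP => h; lia.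
        by rewrite /t updE eqxx e3 mulr1.
      rewrite -/r1 in e1; rewrite -/t in e2.
      move: hmu e2; rewrite /mu ft e3 /=; case: (flag r) hf => //= _.
      move: e1 e4; lia.
    * rewrite tE omDr omNr om_self subr0 /s omDl !omZl !om_ee piK.
      rewrite (hB q hq) mulr0 mulr0 addr0 mul1r.
      by rewrite mulf_neq0 ?sg_neq0.
  + move/existsPn => hno.
    have hr : forall j, j != p -> r 0 j = 0.
      move=> j hj; apply/eqP; move: (hno j); by rewrite hj /= ?andbT negbK.
    have hp1 : ~~ (1 < absz (r 0%R p))%N.
      by move: (hno p); rewrite hp /= eqxx.
    have -> : r = (r 0 p) *: @ee m p.
      apply/matrixP => i j; rewrite (ord1 i) [RHS]mxE eeE.
      case: (eqVneq j p) => [->|hj]; first by rewrite mulr1.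
      by rewrite mulr0 hr.
    apply: Lgen1; move: hp hp1; lia.
Qed.
End Main.

Unset Implicit Arguments.
Theorem lemma4p1 (K : closedFieldType) (m : nat)
  (charK0 : [pchar K] =i pred0) (m_pos : (0 < m)%N) :
  (forall x : Hspace K m, lie_gen (@gens K m) x -> inH x) /\
  (forall x : Hspace K m, inH x -> lie_gen (@gens K m) x).
Proof.
split; first exact: part1.
move=> x hx; apply: part2_red hx _ => r _.
exact: (main charK0 (ltnSn _)).
Qed.
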